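(* Let $G=(V,D)$ be a simple directed graph that is not complete, and let $J=J(\psi_G)$. Then for every node $i\in V$ there exists a set $S$ of $|D|+1$ columns of $J$ such that $S$ contains no column $K_{ij}$ with $j\in V$ (including $K_{ii}$), and $\mathrm{rank}(J_S)\ge|D|-|\mathrm{ch}(i)|+1$.
   Context: A directed graph $G=(V,D)$ has edge set $D\subseteq V\times V$ of ordered pairs $(i,j)$, $i\neq j$. It is simple if $(i,j)$ and $(j,i)$ are never both in $D$. It is complete if every pair of distinct nodes is adjacent. $\mathrm{ch}(i)$ is the set of children of $i$. $\Lambda$ is the $V\times V$ matrix with indeterminate entries $\lambda_{ij}$ for $(i,j)\in D$ and zeros elsewhere, and $s$ is a further indeterminate. Let $\psi_G(\Lambda,s)=s(I-\Lambda)(I-\Lambda)^T=K$. The transposed Jacobian $J(\psi_G)$ has rows indexed by $\{\lambda_{kl}:(k,l)\in D\}\cup\{s\}$ and columns indexed by $K_{ij}$ (with $K_{ij}=K_{ji}$), with entries $\partial K_{ij}/\partial\theta$. $J_S$ is the submatrix on the columns in $S$, and rank means rank over $\mathbb{R}(\lambda,s)$. *)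

(* Defs.v *)
From HB Require Import structures.
From mathcomp Require Import all_boot all_order all_algebra.
From mathcomp Require Import fraction reals.
From mathcomp Require Import mpoly.
Set Implicit Arguments. Unset Strict Implicit. Unset Printing Implicit Defensive.
Import Order.TTheory GRing.Theory Num.Theory.
Local Open Scope ring_scope.

Section Defs.
Variables (R : realType) (n : nat) (D : {set 'I_n * 'I_n}).

(* polynomial ring in the indeterminates lambda_kl ((k,l) in D) and s:
   variable number (index of (k,l) in enum D) is lambda_kl, variable #|D| is s *)
Definition PR := {mpoly R[#|D|.+1]}.

Definition lam (k l : 'I_n) : PR :=
  if (k, l) \in D then 'X_(inord (index (k, l) (enum D))) else 0.

Definition svar : PR := 'X_(ord_max).

Definition Lam : 'M[PR]_n := \matrix_(k, l) lam k l.

Definition Kmx : 'M[PR]_n :=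
  \matrix_(a, b) (svar * ((1%:M - Lam) *m (1%:M - Lam)^T) a b).

(* J_S : rows = all indeterminates (lambda_kl, (k,l) in D, and s),
   columns = the elements of S (a column K_ab is encoded by (a,b) with a <= b),
   entries d K_ab / d theta, viewed in the fraction field R(lambda, s). *)
Definition JS (S : {set 'I_n * 'I_n}) : 'M[{fraction PR}]_(#|D|.+1, #|S|) :=
  \matrix_(r, c) (FracField.tofrac (mderiv r (Kmx (enum_val c).1 (enum_val c).2))).

Definition children (i : 'I_n) : {set 'I_n} := [set j | (i, j) \in D].

End Defs.

(* Main.v *)
Require Import Defs.
From HB Require Import structures.
From mathcomp Require Import all_boot all_order all_algebra.
From mathcomp Require Import fraction reals.
From mathcomp Require Import mpoly.
From mathcomp Require Import zify ring lra.
Set Implicit Arguments. Unset Strict Implicit. Unset Printing Implicit Defensive.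
Import Order.TTheory GRing.Theory Num.Theory.
Local Open Scope ring_scope.

Section Lw.
Variables (F : comRingType) (k : nat) (v w : 'I_k -> F).

Definition Lw (p : {mpoly F[k]}) := \sum_r w r * (mderiv r p).@[v].

Lemma LwD p q : Lw (p + q) = Lw p + Lw q.
Proof. by rewrite /Lw -big_split; apply: eq_bigr => r _; rewrite mderivD mevalD mulrDr. Qed.
Lemma Lw0 : Lw 0 = 0.
Proof. by rewrite /Lw big1 // => r _; rewrite mderiv0 meval0 mulr0. Qed.
Lemma LwN p : Lw (- p) = - Lw p.
Proof. by rewrite /Lw -sumrN; apply: eq_bigr => r _; rewrite mderivN mevalN mulrN. Qed.
Lemma LwB p q : Lw (p - q) = Lw p - Lw q.
Proof. by rewrite LwD LwN. Qed.
Lemma Lw_sum (I : Type) (s : seq I) (P : pred I) (G : I -> {mpoly F[k]}) :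
  Lw (\sum_(j <- s | P j) G j) = \sum_(j <- s | P j) Lw (G j).
Proof. exact: (big_morph Lw LwD Lw0). Qed.
Lemma LwM p q : Lw (p * q) = Lw p * q.@[v] + p.@[v] * Lw q.
Proof.
rewrite /Lw big_distrl big_distrr -big_split; apply: eq_bigr => r _ /=.
by rewrite mderivM mevalD !mevalM; ring.
Qed.
Lemma LwC c : Lw c%:MP = 0.
Proof. by rewrite /Lw big1 // => r _; rewrite mderivC meval0 mulr0. Qed.
Lemma Lw1 : Lw 1 = 0.
Proof. by rewrite -mpolyC1 LwC. Qed.
Lemma Lwb (b : bool) : Lw b%:R = 0.
Proof. by case: b; rewrite ?Lw1 ?Lw0. Qed.
Lemma LwX j : Lw 'X_j = w j.
Proof.
rewrite /Lw (bigD1 j) //= big1 ?addr0.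
  rewrite mderivX mevalZ mevalX mnm1E eqxx mul1r big1 ?mulr1 // => a _.
  by rewrite mnmBE subnn expr0.
move=> r /negPf nr; rewrite mderivX mevalZ mnm1E eq_sym nr mul0r mulr0 //.
Qed.
End Lw.

Lemma rank_frac_ge (F : fieldType) (k p q : nat) (M : 'M[{mpoly F[k]}]_(p, q))
  (v : 'I_k -> F) :
  (\rank (map_mx (meval v) M) <= \rank (map_mx (@FracField.tofrac _) M))%N.
Proof.
set N := map_mx (meval v) M; set r := \rank N.
pose P0 : 'M_(r, p) := pid_mx r *m invmx (col_ebase N).
pose Q0 : 'M_(q, r) := invmx (row_ebase N) *m pid_mx r.
have hPQ : P0 *m N *m Q0 = 1%:M.
  rewrite -{1}(mulmx_ebase N) /P0 /Q0 !mulmxA mulmxKV ?col_ebase_unit //.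
  rewrite mulmxK ?row_ebase_unit //.
  rewrite /r !mul_pid_mx; have h1 := rank_leq_row N; have h2 := rank_leq_col N.
  suff -> : minn q (minn (minn p (minn (\rank N) (\rank N))) (\rank N)) = \rank N by rewrite pid_mx_1.
  lia.
pose c := fun x : F => x%:MP_[k].
pose X := map_mx c P0 *m M *m map_mx c Q0.
have hX : map_mx (meval v) X = 1%:M.
  rewrite !map_mxM -!map_mx_comp -hPQ; congr (_ *m _ *m _);
    by apply/matrixP=> a b; rewrite !mxE /c /= mevalC.
have dX : \det X != 0.
  apply/negP => /eqP h0.
  have := congr1 (meval v) h0; rewrite -det_map_mx hX det1 meval0.
  by move/eqP; rewrite oner_eq0.
have uX : map_mx (@FracField.tofrac _) X \in unitmx.
  by rewrite unitmxE det_map_mx unitfE tofrac_eq0.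
have := mxrank_unit uX; rewrite !map_mxM => <-.
by apply: leq_trans (mxrankM_maxl _ _) _; apply: mxrankM_maxr.
Qed.


Section Main.
Variables (R : realType) (n : nat) (D : {set 'I_n * 'I_n}) (i : 'I_n).
Hypothesis Hloop : forall i : 'I_n, (i, i) \notin D.
Hypothesis Hsimple : forall i j : 'I_n, (i, j) \in D -> (j, i) \notin D.

Definition idx (e : 'I_n * 'I_n) : 'I_(#|D|.+1) := inord (index e (enum D)).

Definition vpt (r : 'I_(#|D|.+1)) : R :=
  if r == ord_max then 1 else (((r < #|D|)%N) && ((nth (i, i) (enum D) r).2 == i))%:R.

Lemma idx_val e : e \in D -> (idx e : nat) = index e (enum D).
Proof. by move=> eD; rewrite inordK // ltnS; apply: ltnW; rewrite cardE index_mem mem_enum. Qed.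

Lemma idx_lt e : e \in D -> (idx e < #|D|)%N.
Proof. by move=> eD; rewrite idx_val // cardE index_mem mem_enum. Qed.

Lemma lam_eval k l : (lam R D k l).@[vpt] = ((k, l) \in D)%:R * (l == i)%:R :> R.
Proof.
rewrite /lam; case: ifP => kl; last by rewrite meval0 mul0r.
rewrite mevalXU /vpt -/(idx (k, l)).
have hl := idx_lt kl.
have -> : (idx (k, l) == ord_max) = false.
  by apply/negbTE; rewrite -val_eqE /= neq_ltn hl.
by rewrite hl /= idx_val // nth_index ?mem_enum //= mul1r.
Qed.

Lemma svar_eval : (svar R D).@[vpt] = 1 :> R.
Proof. by rewrite mevalXU /vpt eqxx. Qed.

Variable w : 'I_(#|D|.+1) -> R.

Definition W k l : R := if (k, l) \in D then w (idx (k, l)) else 0.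

Lemma Lw_lam k l : Lw vpt w (lam R D k l) = W k l.
Proof. by rewrite /lam /W; case: ifP => _; rewrite ?LwX ?Lw0. Qed.

Lemma Lw_svar : Lw vpt w (svar R D) = w ord_max.
Proof. exact: LwX. Qed.

Lemma Kmx_E a b : Kmx R D a b =
  svar R D * \sum_c (((a == c)%:R - lam R D a c) * ((b == c)%:R - lam R D b c)).
Proof. by rewrite /Kmx !mxE; congr (_ * _); apply: eq_bigr => c _; rewrite !mxE. Qed.


Definition pp x : R := ((x, i) \in D)%:R.

Lemma sum_delta (g : 'I_n -> R) x : x != i ->
  \sum_(c | c != i) g c * (x == c)%:R = g x.
Proof.
move=> xi; rewrite (bigD1 x) //= eqxx mulr1 big1 ?addr0 // => c /andP[_ cx].
by rewrite eq_sym (negbTE cx) mulr0.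
Qed.

Lemma LwK a b : a != i -> b != i ->
  Lw vpt w (Kmx R D a b) = w ord_max * ((a == b)%:R + pp a * pp b)
     - W a b - W b a + W a i * pp b + pp a * W b i.
Proof.
move=> ai bi.
rewrite Kmx_E LwM Lw_svar svar_eval mul1r Lw_sum rmorph_sum.
have hQ c : ((((a == c)%:R - lam R D a c) * ((b == c)%:R - lam R D b c)) : PR R D).@[vpt]
   = ((a == c)%:R - ((a, c) \in D)%:R * (c == i)%:R) * ((b == c)%:R - ((b, c) \in D)%:R * (c == i)%:R).
  by rewrite mevalM !mevalB !lam_eval !rmorph_nat.
have hL c : Lw vpt w (((a == c)%:R - lam R D a c) * ((b == c)%:R - lam R D b c))
   = - W a c * ((b == c)%:R - ((b, c) \in D)%:R * (c == i)%:R) + ((a == c)%:R - ((a, c) \in D)%:R * (c == i)%:R) * - W b c.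
  by rewrite LwM !LwB !Lwb !Lw_lam !sub0r !mevalB !lam_eval !rmorph_nat.
rewrite (eq_bigr _ (fun c _ => hQ c)) (eq_bigr _ (fun c _ => hL c)).
rewrite (bigD1 i) //= (bigD1 i (P := predT)) //= eqxx (negbTE ai) (negbTE bi) /=.
have e1 : \sum_(c | c != i) ((a == c)%:R - ((a, c) \in D)%:R * (c == i)%:R) * ((b == c)%:R - ((b, c) \in D)%:R * (c == i)%:R)
   = \sum_(c | c != i) (b == c)%:R * (a == c)%:R :> R.
  by apply: eq_bigr => c /negbTE ci; rewrite ci !mulr0 !subr0 mulrC.
have e2 : \sum_(c | c != i) (- W a c * ((b == c)%:R - ((b, c) \in D)%:R * (c == i)%:R) + ((a == c)%:R - ((a, c) \in D)%:R * (c == i)%:R) * - W b c)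
   = \sum_(c | c != i) (- W a c) * (b == c)%:R + \sum_(c | c != i) (- W b c) * (a == c)%:R :> R.
  by rewrite -big_split; apply: eq_bigr => c /negbTE ci; rewrite ci !mulr0 !subr0 /=; ring.
rewrite e1 e2 !sum_delta // /pp eq_sym.
ring.
Qed.


Lemma nT : true%:R = 1 :> R. Proof. by []. Qed.
Lemma nF : false%:R = 0 :> R. Proof. by []. Qed.

Lemma W_notin k l : (k, l) \notin D -> W k l = 0.
Proof. by rewrite /W => /negbTE ->. Qed.

Lemma key_w (S : {set 'I_n * 'I_n})
  (H0 : forall x, x \in S -> Lw vpt w (Kmx R D x.1 x.2) = 0)
  (HSi : forall x, x \in S -> x.1 != i /\ x.2 != i)
  (Hpar : forall k, (k, i) \in D -> (k, k) \in S)
  (Hedge : forall k l, (k, l) \in D -> k != i -> l != i -> ((k, l) \in S) || ((l, k) \in S))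
  (Hc : (exists a, [/\ a != i, (a, i) \notin D & (a, a) \in S]) \/
        (exists u v, [/\ u != v, (u, v) \notin D, (v, u) \notin D, (u, i) \in D
                       & (v, i) \in D /\ (u, v) \in S]))
  (Hchild : forall l, (i, l) \in D -> w (idx (i, l)) = 0) :
  forall r, w r = 0.
Proof.
have HK x : x \in S -> w ord_max * ((x.1 == x.2)%:R + pp x.1 * pp x.2)
     - W x.1 x.2 - W x.2 x.1 + W x.1 i * pp x.2 + pp x.1 * W x.2 i = 0.
  by move=> xS; have [h1 h2] := HSi x xS; rewrite -LwK // H0.
have hW1 k : k != i -> W k i = - w ord_max * pp k.
  move=> ki; case kiD: ((k, i) \in D); last first.
    by rewrite W_notin ?kiD // /pp kiD mulr0.
  have := HK _ (Hpar _ kiD); rewrite /= eqxx /pp kiD W_notin ?Hloop //.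
  rewrite /= !nT !mulr1 !mul1r !subr0 => h; lra.
have ws0 : w ord_max = 0.
  case: Hc => [[a [ai aiD aaS]] | [u [v [uv uvD vuD uiD [viD uvS]]]]].
    have := HK _ aaS; rewrite /= eqxx /pp (negbTE aiD) W_notin ?Hloop //.
    rewrite /= ?nT ?nF !mulr0 !mul0r !subr0 !addr0 mulr1 => h; lra.
  have [ui vi] := HSi _ uvS.
  have := HK _ uvS; rewrite /= (negbTE uv) (W_notin uvD) (W_notin vuD) !hW1 // /pp uiD viD.
  rewrite /= ?nT ?nF !mul1r !mulr1 !subr0 add0r => h; lra.
have hW2 k : k != i -> W k i = 0 by move=> ki; rewrite hW1 // ws0 oppr0 mul0r.
have hW3 k l : (k, l) \in D -> k != i -> l != i -> W k l = 0.
  move=> klD ki li; have lkD := Hsimple klD.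
  case/orP: (Hedge _ _ klD ki li) => xS.
    have := HK _ xS; rewrite /= ws0 !hW2 // (W_notin lkD) => h; lra.
  have := HK _ xS; rewrite /= ws0 !hW2 // (W_notin lkD) => h; lra.
move=> r; case: (eqVneq r ord_max) => [-> // | rmax].
have rlt : (r < #|D|)%N.
  by move: rmax (ltn_ord r); rewrite -val_eqE /= ltnS leq_eqVlt => /negbTE ->.
set e := nth (i, i) (enum D) r.
have eD : e \in D by rewrite -mem_enum mem_nth // -cardE.
have idxe : idx e = r.
  by apply: val_inj; rewrite /= idx_val // index_uniq ?enum_uniq // -cardE.
have -> : w r = W e.1 e.2 by rewrite /W -surjective_pairing eD idxe.
case: (eqVneq e.1 i) => e1i.
  have ee : (i, e.2) = e by rewrite -e1i -surjective_pairing.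
  rewrite /W -surjective_pairing eD; have := Hchild e.2; rewrite ee; exact.
case: (eqVneq e.2 i) => e2i; first by rewrite e2i hW2.
by apply: hW3; rewrite -?surjective_pairing.
Qed.

End Main.

Section Rank.
Variables (R : realType) (n : nat) (D : {set 'I_n * 'I_n}) (i : 'I_n).
Hypothesis Hloop : forall i : 'I_n, (i, i) \notin D.
Hypothesis Hsimple : forall i j : 'I_n, (i, j) \in D -> (j, i) \notin D.

Lemma rank_main (S : {set 'I_n * 'I_n})
  (HSi : forall x, x \in S -> x.1 != i /\ x.2 != i)
  (Hpar : forall k, (k, i) \in D -> (k, k) \in S)
  (Hedge : forall k l, (k, l) \in D -> k != i -> l != i -> ((k, l) \in S) || ((l, k) \in S))
  (Hc : (exists a, [/\ a != i, (a, i) \notin D & (a, a) \in S]) \/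
        (exists u v, [/\ u != v, (u, v) \notin D, (v, u) \notin D, (u, i) \in D
                       & (v, i) \in D /\ (u, v) \in S])) :
  (#|D| - #|children D i| + 1 <= \rank (JS R D S))%N.
Proof.
pose M : 'M[PR R D]_(#|D|.+1, #|S|) :=
  \matrix_(r, c) mderiv r (Kmx R D (enum_val c).1 (enum_val c).2).
have JSE : JS R D S = map_mx (@FracField.tofrac _) M.
  by apply/matrixP => r c; rewrite !mxE.
pose N := map_mx (meval (vpt R i)) M.
pose Rset := [set r : 'I_(#|D|.+1) | ~~ [exists l, ((i, l) \in D) && (r == idx D (i, l))]].
pose Psel : 'M[R]_(#|Rset|, #|D|.+1) := \matrix_(j, r) ((enum_val j : 'I_(#|D|.+1)) == r :> nat)%:R.
have rf : row_free (Psel *m N).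
  rewrite -kermx_eq0; apply/eqP/row_matrixP => j; rewrite row0.
  set u := row j _.
  have hu : u *m (Psel *m N) = 0 by rewrite /u -row_mul mulmx_ker row0.
  clearbody u.
  pose w : 'I_(#|D|.+1) -> R := fun r => (u *m Psel) 0 r.
  have w0 : forall r, w r = 0.
    apply: (@key_w R n D i Hloop Hsimple w S) => //.
    - move=> x xS; have := congr1 (fun A : 'rV[R]_#|S| => A 0 (enum_rank_in xS x)) hu.
      rewrite mulmxA mxE [RHS]mxE => h; rewrite -[RHS]h /Lw; apply: eq_bigr => r _.
      by rewrite /w /N !mxE enum_rankK_in.
    - move=> l ilD; rewrite /w mxE big1 // => j' _.
      have nR : idx D (i, l) \notin Rset.
        by rewrite inE negbK; apply/existsP; exists l; rewrite ilD eqxx.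
      rewrite /Psel !mxE; case: eqP => [e|_]; last by rewrite mulr0.
      by have := enum_valP j'; rewrite (val_inj e) (negbTE nR).
  apply/rowP => j'; rewrite mxE.
  have := w0 (enum_val j'); rewrite /w /Psel mxE (bigD1 j') //= !mxE eqxx mulr1.
  rewrite big1 ?addr0 // => j'' nj; rewrite !mxE; case: eqP => [e|_]; last by rewrite mulr0.
  by move: nj; rewrite (enum_val_inj (val_inj e)) eqxx.
have rkP : \rank (Psel *m N) = #|Rset| by apply/eqP.
have rkN : (#|Rset| <= \rank (JS R D S))%N.
  rewrite -rkP JSE; apply: leq_trans (mxrankM_maxr _ _) _; exact: rank_frac_ge.
apply: leq_trans rkN.
have cC : (#|~: Rset| <= #|children D i|)%N.
  apply: leq_trans (leq_imset_card (fun l => idx D (i, l)) _).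
  apply/subset_leq_card/subsetP => r; rewrite !inE negbK => /existsP[l /andP[ilD /eqP ->]].
  by apply/imsetP; exists l; rewrite // inE.
have mR : ord_max \in Rset.
  rewrite inE; apply/existsPn => l; apply/negP => /andP[ilD /eqP e].
  by have := idx_lt ilD; rewrite -e /= ltnn.
have c1 : (0 < #|Rset|)%N by apply/card_gt0P; exists ord_max.
have := cardsC Rset; rewrite card_ord => cS.
lia.
Qed.

End Rank.

Section G.
Variables (n : nat) (i : 'I_n).
Definition sortp (e : 'I_n * 'I_n) := if (e.1 <= e.2)%N then e else (e.2, e.1).
Definition gmap (e : 'I_n * 'I_n) :=
  if e.1 == i then (e.2, e.2) else if e.2 == i then (e.1, e.1) else sortp e.

Lemma gmap_inv x y : x.1 != x.2 -> y.1 != y.2 -> gmap x = gmap y ->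
  x = y \/ x = (y.2, y.1).
Proof.
case: x => a b; case: y => c d /=; rewrite /gmap /sortp /=.
case: (eqVneq a i) => [->|ai]; case: (eqVneq b i) => [->|bi];
case: (eqVneq c i) => [->|ci]; case: (eqVneq d i) => [->|di];
case: (leqP a b) => ab; case: (leqP c d) => cd => //=; rewrite ?eqxx //;
move=> h1 h2 [] ?? ; subst; rewrite ?eqxx ?ai ?bi ?ci ?di // in h1 h2 *; 
  try by [left | right].
Qed.
End G.

Section Final.
Variables (R : realType) (n : nat) (D : {set 'I_n * 'I_n}) (i : 'I_n).
Hypothesis Hloop : forall i : 'I_n, (i, i) \notin D.
Hypothesis Hsimple : forall i j : 'I_n, (i, j) \in D -> (j, i) \notin D.

Lemma gmap_sorted e : ((gmap i e).1 <= (gmap i e).2)%N.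
Proof.
rewrite /gmap /sortp; case: ifP => _ /=; first exact: leqnn.
case: ifP => _ /=; first exact: leqnn.
by case: ifP => h //=; move/negbT: h; rewrite -ltnNge => /ltnW.
Qed.

Lemma gmap_avoid e : e.1 != e.2 -> (gmap i e).1 != i /\ (gmap i e).2 != i.
Proof.
case: e => a b /= ab; rewrite /gmap /sortp /=.
case: (eqVneq a i) => [ai|ai]; first by subst; rewrite eq_sym.
case: (eqVneq b i) => [bi|bi] //=.
by case: leqP.
Qed.

Lemma final_S (u v : 'I_n) : u != v -> (u, v) \notin D -> (v, u) \notin D ->
  let S := gmap i @: ((u, v) |: D) in
  ((exists a, [/\ a != i, (a, i) \notin D & (a, a) \in S]) \/
   (exists u v, [/\ u != v, (u, v) \notin D, (v, u) \notin D, (u, i) \in D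
                       & (v, i) \in D /\ (u, v) \in S])) ->
  exists S : {set 'I_n * 'I_n},
    [/\ forall p, p \in S -> (p.1 <= p.2)%N,
        #|S| = #|D|.+1,
        forall p, p \in S -> p.1 != i /\ p.2 != i
      & (#|D| - #|children D i| + 1 <= \rank (JS R D S))%N].
Proof.
move=> uv uvD vuD S Hc.
set T := (u, v) |: D.
have Tl x : x \in T -> x.1 != x.2.
  rewrite !inE => /orP[/eqP -> //|xD]; apply/negP => /eqP e.
  by move: xD; rewrite [x]surjective_pairing e (negbTE (Hloop _)).
have Ts x : x \in T -> (x.2, x.1) \notin T.
  rewrite !inE => /orP[/eqP -> /=|xD].
    by rewrite xpair_eqE negb_or (negbT (contraNF _ uv)) ?vuD // => /andP[/eqP -> _].
  rewrite negb_or Hsimple -?surjective_pairing // andbT.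
  apply/negP => /eqP e; move: xD; rewrite [x]surjective_pairing.
  by case: e => -> ->; rewrite (negbTE vuD).
have inj : {in T &, injective (gmap i)}.
  move=> x y xT yT e; case: (gmap_inv (Tl _ xT) (Tl _ yT) e) => // ex.
  by have := Ts _ yT; rewrite -ex xT.
have HSi : forall p, p \in S -> p.1 != i /\ p.2 != i.
  by move=> p /imsetP[x xT ->]; apply: gmap_avoid; apply: Tl.
exists S; split => //.
- by move=> p /imsetP[x xT ->]; apply: gmap_sorted.
- by rewrite card_in_imset // cardsU1 uvD.
apply: (@rank_main R n D i Hloop Hsimple S HSi) => //.
- move=> k kiD; apply/imsetP; exists (k, i); first by rewrite !inE kiD orbT.
  rewrite /gmap /=; case: eqP => [e|_]; last by rewrite eqxx.
  by move: kiD; rewrite e (negbTE (Hloop _)).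
- move=> k l klD ki li.
  have kS : gmap i (k, l) \in S by apply/imsetP; exists (k, l); rewrite // !inE klD orbT.
  move: kS; rewrite /gmap /= (negbTE ki) (negbTE li) /sortp /=.
  by case: leqP => _ ->; rewrite ?orbT.
Qed.

End Final.

Theorem lemma4p2 (R : realType) (n : nat) (D : {set 'I_n * 'I_n})
  (Hloop : forall i : 'I_n, (i, i) \notin D)
  (Hsimple : forall i j : 'I_n, (i, j) \in D -> (j, i) \notin D)
  (Hnotcomplete : exists i j : 'I_n,
      [/\ i != j, (i, j) \notin D & (j, i) \notin D])
  (i : 'I_n) :
  exists S : {set 'I_n * 'I_n},
    [/\ forall p, p \in S -> (p.1 <= p.2)%N,
        #|S| = #|D|.+1,
        forall p, p \in S -> p.1 != i /\ p.2 != i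
      & (#|D| - #|children D i| + 1 <= \rank (JS R D S))%N].
Proof.
case: (pickP (fun a : 'I_n => (a != i) && ((a, i) \notin D))) => [a /andP[ai aiD] | noa].
  case: (boolP ((i, a) \in D)) => iaD.
    case: Hnotcomplete => u [v [uv uvD vuD]].
    apply: (@final_S R n D i Hloop Hsimple u v uv uvD vuD); left; exists a; split => //.
    apply/imsetP; exists (i, a); first by rewrite !inE iaD orbT.
    by rewrite /gmap /= eqxx.
  have ia : i != a by rewrite eq_sym.
  apply: (@final_S R n D i Hloop Hsimple i a ia iaD aiD); left; exists a; split => //.
  apply/imsetP; exists (i, a); first by rewrite !inE eqxx.
  by rewrite /gmap /= eqxx.
case: Hnotcomplete => u [v [uv uvD vuD]].
have par x : x != i -> (x, i) \in D.
  by move=> xi; have := noa x; rewrite xi /= => /negbFE.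
have ui : u != i.
  apply/negP => /eqP e; subst u; by rewrite par 1?eq_sym in vuD.
have vi : v != i.
  apply/negP => /eqP e; subst v; by rewrite par in uvD.
apply: (@final_S R n D i Hloop Hsimple u v uv uvD vuD); right.
have mem : gmap i (u, v) \in gmap i @: ((u, v) |: D).
  by apply/imsetP; exists (u, v); rewrite // !inE eqxx.
move: mem; rewrite /gmap /= (negbTE ui) (negbTE vi) /sortp /=.
case: ifP => _ /= mem.
  by exists u, v; split => //; [rewrite par | split; [rewrite par|]].
by exists v, u; split => //; [rewrite eq_sym | rewrite par | split; [rewrite par|]].
Qed.
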